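(* For integers $1\le k\le n$, the number of binary words of length $n+k-1$ with exactly $2k-1$ zeros equals the number of words of length $n-1$ over the alphabet $\{0,1,2\}$ having exactly $k-1$ letters equal to $2$ and avoiding $01$ (no letter $0$ is immediately followed by the letter $1$).
   Context: Words may be empty. *)

(* Defs.v *)
From mathcomp Require Import all_boot.
Set Implicit Arguments. Unset Strict Implicit. Unset Printing Implicit Defensive.

(* Words of length m over the alphabet {0,...,q-1} are m.-tuple 'I_q;
   letters are read as natural numbers via nat_of_ord. *)

Definition nocc (q m a : nat) (w : m.-tuple 'I_q) : nat :=
  count (fun x : 'I_q => nat_of_ord x == a) w.

Definition has01 (q m : nat) (w : m.-tuple 'I_q) : bool :=
  let s := map (@nat_of_ord q) w in
  [exists i : 'I_m, (i.+1 < m) && (nth 0 s i == 0) && (nth 0 s i.+1 == 1)].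

(* Main.v *)
Require Import Defs.
From mathcomp Require Import all_boot zify.

Definition cntS q m (P : seq nat -> bool) :=
  \sum_(w : m.-tuple 'I_q) (P (map (@nat_of_ord q) w) : nat).

Lemma card_cnt q m (P : seq nat -> bool) :
  #|[set w : m.-tuple 'I_q | P (map (@nat_of_ord q) w)]| = cntS q m P.
Proof.
rewrite -sum1_card big_mkcond /cntS /=; apply: eq_bigr => w _.
by rewrite inE; case: (P _).
Qed.

Lemma eq_cntS q m (P P' : seq nat -> bool) : P =1 P' -> cntS q m P = cntS q m P'.
Proof. by move=> e; apply: eq_bigr => w _; rewrite e. Qed.

Lemma cntS_split q m (P Q : seq nat -> bool) :
  cntS q m (fun s => P s && ~~ Q s) + cntS q m (fun s => P s && Q s) = cntS q m P.
Proof. rewrite /cntS -big_split; apply: eq_bigr => w _; by case: (P _); case: (Q _). Qed.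

Lemma cntS_false q m : cntS q m (fun _ => false) = 0.
Proof. by rewrite /cntS big1. Qed.

Lemma cntS0 q P : cntS q 0 P = P [::].
Proof.
rewrite /cntS (big_pred1 [tuple]) //= => t.
by symmetry; apply/eqP; exact: tuple0.
Qed.

Lemma cntS_cons q m P :
  cntS q m.+1 P = \sum_(x < q) cntS q m (fun s => P (nat_of_ord x :: s)).
Proof.
rewrite /cntS pair_big /=.
rewrite (reindex (fun p : 'I_q * m.-tuple 'I_q => [tuple of p.1 :: p.2])) /=.
  by apply: eq_bigr => -[x t] _.
exists (fun w : m.+1.-tuple 'I_q => (thead w, [tuple of behead w])) => [[x t] _ | w _] /=.
  by congr pair; apply: val_inj.
by apply: val_inj => /=; case: w => -[|a s] //=.
Qed.

Fixpoint has01s (s : seq nat) : bool :=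
  if s is a :: s' then ((a == 0) && (nth 0 s' 0 == 1)) || has01s s' else false.

Lemma has01sP s :
  reflect (exists i, [&& i.+1 < size s, nth 0 s i == 0 & nth 0 s i.+1 == 1]) (has01s s).
Proof.
elim: s => [|a s IH] /=.
  by apply: ReflectF => -[i].
apply: (iffP orP).
  case=> [/andP[a0 s1]|/IH[i /and3P[h1 h2 h3]]].
    exists 0; rewrite /= a0 s1 andbT.
    by case: s s1 {IH}.
  by exists i.+1; apply/and3P; split.
case=> -[|i] /= /and3P[h1 h2 h3].
  by left; rewrite h2 h3.
by right; apply/IH; exists i; apply/and3P; split.
Qed.

Lemma has01E m (w : m.-tuple 'I_3) : has01 w = has01s (map (@nat_of_ord 3) w).
Proof.
have sz : size (map (@nat_of_ord 3) w) = m by rewrite size_map size_tuple.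
rewrite /has01; apply/existsP/has01sP.
  by case=> i h; exists (nat_of_ord i); rewrite sz andbA.
case=> i; rewrite sz => /and3P[h1 h2 h3].
have him : i < m by apply: ltnW.
by exists (Ordinal him); rewrite /= h1 h2 h3.
Qed.

Definition Pg j (s : seq nat) := (count (pred1 2) s == j) && ~~ has01s s.
Definition A m j := cntS 3 m (Pg j).
Definition E m j := cntS 3 m (fun s => Pg j s && (nth 0 s 0 == 1)).

Lemma A0 j : A 0 j = (j == 0).
Proof. by rewrite /A cntS0 /Pg /= eq_sym; case: (j == 0). Qed.
Lemma E0 j : E 0 j = 0.
Proof. by rewrite /E cntS0 /= andbF. Qed.

Lemma Erec m j : E m.+1 j = A m j.
Proof.
rewrite /E cntS_cons !big_ord_recl big_ord0 /=.
rewrite (@eq_cntS _ _ _ (fun _ => false)); last by move=> s; rewrite andbF.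
rewrite [X in _ + (_ + (X + _))](@eq_cntS _ _ _ (fun _ => false)); last by move=> s; rewrite andbF.
rewrite /bump /= !cntS_false !add0n !addn0 /A; apply: eq_cntS => s.
by rewrite andbT /Pg /=.
Qed.

Lemma Arec m j : A m.+1 j + E m j = (if j is j'.+1 then A m j' else 0) + 2 * A m j.
Proof.
rewrite /A cntS_cons !big_ord_recl big_ord0 /= addn0 /bump /= ?add1n ?addn0.
rewrite (@eq_cntS _ _ _ (fun s => Pg j s && ~~ (nth 0 s 0 == 1))); last first.
  move=> s; rewrite /Pg /= add0n.
  by case: (_ == j); case: (nth 0 s 0 == 1); case: (has01s s).
rewrite [X in _ + (X + _)](@eq_cntS _ _ _ (Pg j)); last first.
  by move=> s; rewrite /Pg /=.
rewrite [X in _ + (_ + X)](@eq_cntS _ _ _ (fun s => if j is j'.+1 then Pg j' s else false)); last first.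
  by move=> s; rewrite /Pg /=; case: j => [|j] //=; rewrite add1n.
have hs := cntS_split 3 m (Pg j) (fun s => nth 0 s 0 == 1).
rewrite /E; case: j hs => [|j] hs; rewrite ?cntS_false.
  by rewrite addn0 add0n -hs; lia.
have e : cntS 3 m [eta Pg j] = cntS 3 m (Pg j) by [].
by rewrite e -hs; lia.
Qed.

Definition Z N r := cntS 2 N (fun s => count (pred1 0) s == r).

Lemma Zval N r : Z N r = 'C(N, r).
Proof.
elim: N r => [|N IH] r.
  by rewrite /Z cntS0 bin0n /= eq_sym.
rewrite /Z cntS_cons !big_ord_recl big_ord0 /= addn0 /bump /= ?add1n ?addn0.
rewrite [X in _ + X](@eq_cntS _ _ _ (fun s => count (pred1 0) s == r)); last first.
  by move=> s /=.
rewrite -/(Z N r) IH.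
case: r => [|r].
  rewrite (@eq_cntS _ _ _ (fun _ => false)) ?cntS_false ?bin0 //.
rewrite (@eq_cntS _ _ _ (fun s => count (pred1 0) s == r)); last first.
  by move=> s /=; rewrite add1n eqSS.
by rewrite -/(Z N r) IH binS addnC.
Qed.

Lemma binid N r : 'C(N.+2, r.+2) + 'C(N, r.+2) = 'C(N, r) + 2 * 'C(N.+1, r.+2).
Proof.
have h1 := binS N.+1 r.+1; have h2 := binS N r.+1; have h3 := binS N r; lia.
Qed.

Lemma Aval m : forall j, A m j = 'C(m + j + 1, j.*2.+1) /\ A m.+1 j = 'C(m + j + 2, j.*2.+1).
Proof.
elim: m => [|m IH] j.
  have a0 : forall j, A 0 j = 'C(j + 1, j.*2.+1).
    case=> [|i]; rewrite A0 //= bin_small //; lia.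
  split; first by rewrite a0.
  have := Arec 0 j; rewrite E0 addn0 => ->.
  case: j => [|[|i]]; rewrite ?A0 //= bin_small //; lia.
split; first by case: (IH j) => _ ->; congr binomial; lia.
have := Arec m.+1 j; rewrite Erec.
case: j => [|i].
  case: (IH 0) => -> ->; case: (IH 0) => _ _.
  rewrite !bin1 => h.
  lia.
case: (IH i.+1) => -> ->; case: (IH i) => _ ->.
have := binid (m + i + 2) (i.*2.+1).
have -> : (m + i + 2).+2 = m.+1 + i.+1 + 2 by lia.
have -> : (i.*2.+1).+2 = (i.+1).*2.+1 by rewrite doubleS.
have -> : (m + i + 2).+1 = m + i.+1 + 2 by lia.
have -> : m + i + 2 = m + i.+1 + 1 by lia.
have -> : m + i.+1 + 1 = m + i + 2 by lia.
lia.
Qed.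

Theorem mainTheorem16 (n k : nat) :
  1 <= k -> k <= n ->
  #|[set w : (n + k - 1).-tuple 'I_2 | nocc 0 w == 2 * k - 1]|
  = #|[set w : (n - 1).-tuple 'I_3 | (nocc 2 w == k - 1) && ~~ has01 w]|.
Proof.
move=> hk hkn.
have -> : [set w : (n + k - 1).-tuple 'I_2 | nocc 0 w == 2 * k - 1]
  = [set w : (n + k - 1).-tuple 'I_2 | (fun s => count (pred1 0) s == 2 * k - 1) (map (@nat_of_ord 2) w)].
  by apply/setP => w; rewrite !inE /nocc count_map.
have -> : [set w : (n - 1).-tuple 'I_3 | (nocc 2 w == k - 1) && ~~ has01 w]
  = [set w : (n - 1).-tuple 'I_3 | Pg (k - 1) (map (@nat_of_ord 3) w)].
  by apply/setP => w; rewrite !inE /nocc /Pg count_map has01E.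
rewrite (card_cnt _ _ (fun s => count (pred1 0) s == 2 * k - 1)) (card_cnt _ _ (Pg (k - 1))); change (Z (n + k - 1) (2 * k - 1) = A (n - 1) (k - 1)); rewrite Zval.
case: (Aval (n - 1) (k - 1)) => -> _.
congr binomial; lia.
Qed.
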